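(* Let $\Sigma$ be a signature, $T$ a monad on sets carrying a continuous $\Sigma$-algebra structure, and $\Gamma$ a relator for the monad $T$ that is inductive and respects $\Sigma$. Then the $\Gamma$-contextual preorder $\leq_\Gamma$ is a compatible and $\Gamma$-preadequate preorder.
   Context: An $\omega$CPPO is a poset with least element $\bot$ in which every $\omega$-chain has a lub; continuous = monotone and preserving such lubs. $T$ (unit $\eta$, bind $u\texttt{>>=}f$) carries a continuous $\Sigma$-algebra structure if each $TX$ is an $\omega$CPPO, bind is continuous in both arguments, and each $\sigma\in\Sigma$ of arity $k$ is interpreted by a continuous $\sigma^T:(TX)^k\to TX$. A relator $\Gamma$ for $T$ assigns to each $R\subseteq X\times Y$ a relation $\Gamma R\subseteq TX\times TY$ with: $=_{TX}\subseteq\Gamma(=_X)$; $\Gamma S\circ\Gamma R\subseteq\Gamma(S\circ R)$; $\Gamma((f\times g)^{-1}R)=(Tf\times Tg)^{-1}\Gamma R$ where $(f\times g)^{-1}R=\{(z,w)\mid f(z)\,R\,g(w)\}$; monotone in $R$; $x\,R\,y\Rightarrow\eta(x)\,\Gamma R\,\eta(y)$; and if $x\,R\,y\Rightarrow f(x)\,\Gamma S\,g(y)$ for all $x,y$ then $u\,\Gamma R\,v\Rightarrow(u\texttt{>>=}f)\,\Gamma S\,(v\texttt{>>=}g)$. It is inductive if for every $R$: $\bot\,\Gamma R\,v$ for all $v$, and for every $\omega$-chain $(u_n)$ and $v$, $(\forall n.\ u_n\,\Gamma R\,v)\Rightarrow\bigsqcup_n u_n\,\Gamma R\,v$. It respects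 $\Sigma$ if $u_i\,\Gamma R\,v_i$ for all $i$ implies $\sigma^T(u_1,\dots,u_k)\,\Gamma R\,\sigma^T(v_1,\dots,v_k)$. Terms and values: $M,N::=\mathsf{return}\,V\mid VW\mid(M\ \mathsf{to}\ x.N)\mid\sigma(M_1,\dots,M_{\alpha(\sigma)})$, $V,W::=x\mid\lambda x.M$, modulo $\alpha$-equivalence; $M[V/x]$ is substitution; $\mathcal{T}_0,\mathcal{V}_0$ closed terms/values; $\mathcal{T}(\bar x),\mathcal{V}(\bar x)$ those with free variables in $\bar x$. For closed $M$: $M^{(0)}=\bot$, $(\mathsf{return}\,V)^{(n+1)}=\eta(V)$, $((\lambda x.M)V)^{(n+1)}=(M[V/x])^{(n)}$, $(M\ \mathsf{to}\ x.N)^{(n+1)}=M^{(n)}\texttt{>>=}(V\mapsto(N[V/x])^{(n)})$, $(\sigma(M_1,\dots,M_k))^{(n+1)}=\sigma^T(M_1^{(n)},\dots,M_k^{(n)})$; this is an $\omega$-chain in $T\mathcal{V}_0$ and $[\![M]\!]=\bigsqcup_n M^{(n)}$. A $\lambda$-term relation is a pair $R=(R_{\mathcal{T}},R_{\mathcal{V}})$ of sets of triples $(\bar x,M,N)$ with $M,N\in\mathcal{T}(\bar x)$, resp. $(\bar x,V,W)$ with $V,W\in\mathcal{V}(\bar x)$, written $\bar x\vdash M\,R\,N$. It is compatible if: $\bar x\vdash x\,R_{\mathcal{V}}\,x$ for $x\in\bar x$; $\bar x\cup\{x\}\vdash M\,R_{\mathcal{T}}\,N$ ($x\notin\bar x$)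 implies $\bar x\vdash\lambda x.M\,R_{\mathcal{V}}\,\lambda x.N$; $\bar x\vdash V\,R_{\mathcal{V}}\,W$ implies $\bar x\vdash\mathsf{return}\,V\,R_{\mathcal{T}}\,\mathsf{return}\,W$; $\bar x\vdash V\,R_{\mathcal{V}}\,V'$ and $\bar x\vdash W\,R_{\mathcal{V}}\,W'$ imply $\bar x\vdash VW\,R_{\mathcal{T}}\,V'W'$; $\bar x\vdash M\,R_{\mathcal{T}}\,M'$ and $\bar x\cup\{x\}\vdash N\,R_{\mathcal{T}}\,N'$ ($x\notin\bar x$) imply $\bar x\vdash(M\ \mathsf{to}\ x.N)\,R_{\mathcal{T}}\,(M'\ \mathsf{to}\ x.N')$; $\bar x\vdash M_i\,R_{\mathcal{T}}\,N_i$ for all $i$ implies $\bar x\vdash\sigma(M_1,\dots,M_n)\,R_{\mathcal{T}}\,\sigma(N_1,\dots,N_n)$. Let $\mathcal{U}=\mathcal{V}_0\times\mathcal{V}_0$. For a relator $\Delta$, $R$ is $\Delta$-preadequate if for all closed $M,N$, $\emptyset\vdash M\,R_{\mathcal{T}}\,N$ implies $[\![M]\!]\,\Delta\mathcal{U}\,[\![N]\!]$. The $\Delta$-contextual preorder $\leq_\Delta$ is the (componentwise) union of all compatible $\Delta$-preadequate $\lambda$-term relations. $R$ is a preorder if for each $\bar x$ its restrictions to $\mathcal{T}(\bar x)$ and $\mathcal{V}(\bar x)$ are reflexive and transitive. *)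

(* Defs.v *)
From mathcomp Require Import all_boot.
From mathcomp Require Import finmap.

Set Implicit Arguments.
Unset Strict Implicit.
Unset Printing Implicit Defensive.

Local Open Scope fset_scope.

(* Syntax: fine-grain call-by-value lambda-calculus with algebraic     *)
(* operations, in locally nameless representation (free variables are *)
(* names in nat, bound variables are de Bruijn indices), so that       *)
(* alpha-equivalent terms are syntactically equal.                     *)

Inductive tm (Sig : Type) (ar : Sig -> nat) : Type :=
| tret : val ar -> tm ar
| tapp : val ar -> val ar -> tm ar
| tseq : tm ar -> tm ar -> tm ar                 (* M to x. N  (N binds index 0) *)
| top  : forall s : Sig, ('I_(ar s) -> tm ar) -> tm ar
with val (Sig : Type) (ar : Sig -> nat) : Type :=
| vbv  : nat -> val ar
| vfv  : nat -> val ar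
| vlam : tm ar -> val ar.                        (* lambda x. M (M binds index 0) *)

Arguments tret {Sig ar}.
Arguments tapp {Sig ar}.
Arguments tseq {Sig ar}.
Arguments top {Sig ar}.
Arguments vbv {Sig ar}.
Arguments vfv {Sig ar}.
Arguments vlam {Sig ar}.

Section Syntax.
Variables (Sig : Type) (ar : Sig -> nat).
Local Notation tm := (tm ar).
Local Notation val := (val ar).

Fixpoint open_tm (k : nat) (u : val) (M : tm) {struct M} : tm :=
  match M with
  | tret v => tret (open_val k u v)
  | tapp v w => tapp (open_val k u v) (open_val k u w)
  | tseq m n => tseq (open_tm k u m) (open_tm k.+1 u n)
  | top s ms => top s (fun i => open_tm k u (ms i))
  end
with open_val (k : nat) (u : val) (v : val) {struct v} : val :=
  match v with
  | vbv j => if j == k then u else vbv j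
  | vfv x => vfv x
  | vlam m => vlam (open_tm k.+1 u m)
  end.

Fixpoint close_tm (k : nat) (x : nat) (M : tm) {struct M} : tm :=
  match M with
  | tret v => tret (close_val k x v)
  | tapp v w => tapp (close_val k x v) (close_val k x w)
  | tseq m n => tseq (close_tm k x m) (close_tm k.+1 x n)
  | top s ms => top s (fun i => close_tm k x (ms i))
  end
with close_val (k : nat) (x : nat) (v : val) {struct v} : val :=
  match v with
  | vbv j => vbv j
  | vfv y => if y == x then vbv k else vfv y
  | vlam m => vlam (close_tm k.+1 x m)
  end.

Fixpoint wf_tm (xs : {fset nat}) (k : nat) (M : tm) {struct M} : bool :=
  match M with
  | tret v => wf_val xs k v
  | tapp v w => wf_val xs k v && wf_val xs k w
  | tseq m n => wf_tm xs k m && wf_tm xs k.+1 n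
  | top s ms => [forall i, wf_tm xs k (ms i)]
  end
with wf_val (xs : {fset nat}) (k : nat) (v : val) {struct v} : bool :=
  match v with
  | vbv j => j < k
  | vfv y => y \in xs
  | vlam m => wf_tm xs k.+1 m
  end.

Definition terms (xs : {fset nat}) (M : tm) : bool := wf_tm xs 0 M.
Definition values (xs : {fset nat}) (V : val) : bool := wf_val xs 0 V.

Definition lam (x : nat) (M : tm) : val := vlam (close_tm 0 x M).
Definition seqto (M : tm) (x : nat) (N : tm) : tm := tseq M (close_tm 0 x N).

Definition cval : Type := {V : val | values fset0 V}.

End Syntax.

Record monad_ops (Sig : Type) (ar : Sig -> nat) (T : Type -> Type) := MonadOps {
  eta  : forall X : Type, X -> T X;
  bind : forall X Y : Type, T X -> (X -> T Y) -> T Y;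
  le   : forall X : Type, T X -> T X -> Prop;
  bot  : forall X : Type, T X;
  sup  : forall X : Type, (nat -> T X) -> T X;
  opT  : forall (X : Type) (s : Sig), ('I_(ar s) -> T X) -> T X
}.

Arguments eta {Sig ar T} _ {X}.
Arguments bind {Sig ar T} _ {X Y}.
Arguments le {Sig ar T} _ {X}.
Arguments bot {Sig ar T} _ {X}.
Arguments sup {Sig ar T} _ {X}.
Arguments opT {Sig ar T} _ {X}.

Section Monad.
Variables (Sig : Type) (ar : Sig -> nat) (T : Type -> Type) (M : monad_ops ar T).

Definition monad_laws : Prop :=
  (forall (X Y : Type) (x : X) (f : X -> T Y), bind M (eta M x) f = f x) /\
  (forall (X : Type) (u : T X), bind M u (fun x => eta M x) = u) /\
  (forall (X Y Z : Type) (u : T X) (f : X -> T Y) (g : Y -> T Z),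
      bind M (bind M u f) g = bind M u (fun x => bind M (f x) g)).

Definition chain {X : Type} (u : nat -> T X) : Prop :=
  forall n, le M (u n) (u n.+1).

Definition omega_cppo : Prop :=
  forall X : Type,
    (forall u : T X, le M u u) /\
    (forall u v w : T X, le M u v -> le M v w -> le M u w) /\
    (forall u v : T X, le M u v -> le M v u -> u = v) /\
    (forall u : T X, le M (bot M) u) /\
    (forall u : nat -> T X, chain u ->
       (forall n, le M (u n) (sup M u)) /\
       (forall w, (forall n, le M (u n) w) -> le M (sup M u) w)).

Definition bind_continuous : Prop :=
  (forall (X Y : Type) (u u' : T X) (f : X -> T Y),
      le M u u' -> le M (bind M u f) (bind M u' f)) /\
  (forall (X Y : Type) (u : nat -> T X) (f : X -> T Y),
      chain u -> bind M (sup M u) f = sup M (fun n => bind M (u n) f)) /\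
  (forall (X Y : Type) (u : T X) (f g : X -> T Y),
      (forall x, le M (f x) (g x)) -> le M (bind M u f) (bind M u g)) /\
  (forall (X Y : Type) (u : T X) (f : nat -> X -> T Y),
      (forall x, chain (fun n => f n x)) ->
      bind M u (fun x => sup M (fun n => f n x)) = sup M (fun n => bind M u (f n))).

Definition ops_continuous : Prop :=
  (forall (X : Type) (s : Sig) (us vs : 'I_(ar s) -> T X),
      (forall i, le M (us i) (vs i)) -> le M (opT M s us) (opT M s vs)) /\
  (forall (X : Type) (s : Sig) (us : nat -> 'I_(ar s) -> T X),
      (forall i, chain (fun n => us n i)) ->
      opT M s (fun i => sup M (fun n => us n i)) = sup M (fun n => opT M s (us n))).

Definition cont_sigma_monad : Prop :=
  monad_laws /\ omega_cppo /\ bind_continuous /\ ops_continuous.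

Definition fmap {X Y : Type} (f : X -> Y) (u : T X) : T Y :=
  bind M u (fun x => eta M (f x)).

Definition relT_type : Type :=
  forall X Y : Type, (X -> Y -> Prop) -> T X -> T Y -> Prop.

Definition rcomp {X Y Z : Type} (R : X -> Y -> Prop) (S : Y -> Z -> Prop) : X -> Z -> Prop :=
  fun x z => exists y, R x y /\ S y z.       (* S o R *)

Definition relator (G : relT_type) : Prop :=
  (forall (X : Type) (u : T X), G X X (@eq X) u u) /\
  (forall (X Y Z : Type) (R : X -> Y -> Prop) (S : Y -> Z -> Prop) u v w,
      G X Y R u v -> G Y Z S v w -> G X Z (rcomp R S) u w) /\
  (forall (X Y X' Y' : Type) (f : X' -> X) (g : Y' -> Y) (R : X -> Y -> Prop) u v,
      G X' Y' (fun z w => R (f z) (g w)) u v <-> G X Y R (fmap f u) (fmap g v)) /\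
  (forall (X Y : Type) (R R' : X -> Y -> Prop) u v,
      (forall x y, R x y -> R' x y) -> G X Y R u v -> G X Y R' u v) /\
  (forall (X Y : Type) (R : X -> Y -> Prop) x y,
      R x y -> G X Y R (eta M x) (eta M y)) /\
  (forall (X Y X' Y' : Type) (R : X -> Y -> Prop) (S : X' -> Y' -> Prop)
          (f : X -> T X') (g : Y -> T Y') u v,
      (forall x y, R x y -> G X' Y' S (f x) (g y)) ->
      G X Y R u v -> G X' Y' S (bind M u f) (bind M v g)).

Definition inductive_relator (G : relT_type) : Prop :=
  forall (X Y : Type) (R : X -> Y -> Prop),
    (forall v : T Y, G X Y R (bot M) v) /\
    (forall (u : nat -> T X) (v : T Y),
        chain u -> (forall n, G X Y R (u n) v) -> G X Y R (sup M u) v).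

Definition respects_sig (G : relT_type) : Prop :=
  forall (X Y : Type) (R : X -> Y -> Prop) (s : Sig)
         (us : 'I_(ar s) -> T X) (vs : 'I_(ar s) -> T Y),
    (forall i, G X Y R (us i) (vs i)) -> G X Y R (opT M s us) (opT M s vs).

Local Notation tm := (tm ar).
Local Notation val := (val ar).
Local Notation cval := (cval ar).

(* eta(V) for a closed value V (junk value bot otherwise) *)
Definition ret_closed (v : val) : T cval :=
  match values fset0 v as b return values fset0 v = b -> T cval with
  | true => fun h => eta M (exist (fun V : val => values fset0 V) v h)
  | false => fun _ => bot M
  end erefl.

Fixpoint approx (n : nat) (P : tm) {struct n} : T cval :=
  match n with
  | 0 => bot M
  | n'.+1 =>
    match P with
    | tret v => ret_closed v
    | tapp (vlam m) w => approx n' (open_tm 0 w m)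
    | tapp _ _ => bot M
    | tseq m p => bind M (approx n' m) (fun V : cval => approx n' (open_tm 0 (sval V) p))
    | top s ms => opT M s (fun i => approx n' (ms i))
    end
  end.

Definition sem (P : tm) : T cval := sup M (fun n => approx n P).

Record lrel := LRel {
  relT : {fset nat} -> tm -> tm -> Prop;
  relV : {fset nat} -> val -> val -> Prop
}.

Definition is_lrel (R : lrel) : Prop :=
  (forall xs P Q, relT R xs P Q -> terms xs P /\ terms xs Q) /\
  (forall xs V W, relV R xs V W -> values xs V /\ values xs W).

Definition compatible (R : lrel) : Prop :=
  (forall xs x, x \in xs -> relV R xs (vfv x) (vfv x)) /\
  (forall xs x P Q, x \notin xs -> relT R (x |` xs) P Q ->
      relV R xs (lam x P) (lam x Q)) /\
  (forall xs V W, relV R xs V W -> relT R xs (tret V) (tret W)) /\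
  (forall xs V V' W W', relV R xs V V' -> relV R xs W W' ->
      relT R xs (tapp V W) (tapp V' W')) /\
  (forall xs x P P' Q Q', relT R xs P P' -> x \notin xs -> relT R (x |` xs) Q Q' ->
      relT R xs (seqto P x Q) (seqto P' x Q')) /\
  (forall xs (s : Sig) (ps qs : 'I_(ar s) -> tm),
      (forall i, relT R xs (ps i) (qs i)) -> relT R xs (top s ps) (top s qs)).

Definition Urel : cval -> cval -> Prop := fun _ _ => True.

Definition preadequate (G : relT_type) (R : lrel) : Prop :=
  forall P Q : tm, relT R fset0 P Q -> G cval cval Urel (sem P) (sem Q).

Definition ctx_preorder (G : relT_type) : lrel := {|
  relT := fun xs P Q => exists R, is_lrel R /\ compatible R /\ preadequate G R /\ relT R xs P Q;
  relV := fun xs V W => exists R, is_lrel R /\ compatible R /\ preadequate G R /\ relV R xs V W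
|}.

Definition is_preorder (R : lrel) : Prop :=
  forall xs : {fset nat},
    (forall P, terms xs P -> relT R xs P P) /\
    (forall P Q S, terms xs P -> terms xs Q -> terms xs S ->
        relT R xs P Q -> relT R xs Q S -> relT R xs P S) /\
    (forall V, values xs V -> relV R xs V V) /\
    (forall V W Z, values xs V -> values xs W -> values xs Z ->
        relV R xs V W -> relV R xs W Z -> relV R xs V Z).

End Monad.

(* Main.v *)
Require Import Defs.
From mathcomp Require Import all_boot.
From mathcomp Require Import finmap.

From Stdlib Require Import FunctionalExtensionality.
Set Implicit Arguments. Unset Strict Implicit.
Local Open Scope fset_scope.

Lemma fresh_ex (xs : {fset nat}) n : exists x, n <= x /\ x \notin xs.
Proof.
exists (maxn n (\max_(y <- xs) y).+1); split; first exact: leq_maxl.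
apply/negP => H.
have := @leq_bigmax_seq _ (enum_fset xs) predT (fun y : nat => y) _ H (erefl true).
by rewrite leqNgt (leq_trans _ (leq_maxr _ _)).
Qed.

Scheme tm_mut := Induction for Defs.tm Sort Prop
with val_mut := Induction for Defs.val Sort Prop.

Section S.
Variables (Sig : Type) (ar : Sig -> nat).
Local Notation tm := (tm ar).
Local Notation val := (Defs.val ar).


Fixpoint st (M : tm) : nat := match M with
 | tret v => (sv v).+1 | tapp v w => (sv v + sv w).+1
 | tseq m n => (st m + st n).+1
 | top s ms => (\max_(i < ar s) st (ms i)).+1 end
with sv (v : val) : nat := match v with
 | vlam m => (st m).+1 | _ => 0 end.

Fixpoint nbt (M : tm) : nat := match M with
 | tret v => nbv v | tapp v w => maxn (nbv v) (nbv w)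
 | tseq m n => maxn (nbt m) (nbt n)
 | top s ms => \max_(i < ar s) nbt (ms i) end
with nbv (v : val) : nat := match v with
 | vfv y => y.+1 | vbv _ => 0 | vlam m => nbt m end.

Lemma st_open x : (forall M k, st (open_tm k (vfv x) M) = st M) /\
  (forall V k, sv (open_val k (vfv x) V) = sv V).
Proof.
split; [apply: (@tm_mut Sig ar (fun M => forall k, st (open_tm k (vfv x) M) = st M)
   (fun V => forall k, sv (open_val k (vfv x) V) = sv V))|
   apply: (@val_mut Sig ar (fun M => forall k, st (open_tm k (vfv x) M) = st M)
   (fun V => forall k, sv (open_val k (vfv x) V) = sv V))] => /=;
 try by move=> *; congruence.
all: try by move=> s ms IH k; congr S; apply: eq_bigr => i _; apply: IH.
all: by move=> j k; case: (j == k).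
Qed.

Lemma nbt_top s ms : nbt (top s ms) = \max_(i < ar s) nbt (ms i).
Proof. by []. Qed.

Lemma close_open x : (forall M k, nbt M <= x -> close_tm k x (open_tm k (vfv x) M) = M) /\
  (forall V k, nbv V <= x -> close_val k x (open_val k (vfv x) V) = V).
Proof.
pose P := (fun M => forall k, nbt M <= x -> close_tm k x (open_tm k (vfv x) M) = M).
pose Q := (fun V => forall k, nbv V <= x -> close_val k x (open_val k (vfv x) V) = V).
have H : (forall M, P M) /\ (forall V, Q V).
  split; [apply: (@tm_mut Sig ar P Q)| apply: (@val_mut Sig ar P Q)]; rewrite /P /Q.
  all: try (by move=> s ms IH k; rewrite nbt_top => h; rewrite /=; f_equal; apply: functional_extensionality => i;
       apply: IH; apply: leq_trans h; exact: (@leq_bigmax _ (fun j => nbt (ms j)) i)).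
  all: rewrite /=.
  all: try (by move=> v IH k h; rewrite IH).
  all: try (by move=> v IHv w IHw k; rewrite geq_max => /andP[h1 h2]; rewrite IHv // IHw).
  all: try (by move=> j k _; case: eqP => [->|//] /=; rewrite eqxx).
  all: try (by move=> y k h; case: eqP => // e; rewrite e ltnn in h).
by case: H => H1 H2; split; [exact: H1|exact: H2].
Qed.

Lemma wf_open (x : nat) (xs : {fset nat}) : (forall (M : tm) k, wf_tm xs k.+1 M -> wf_tm (x |` xs) k (open_tm k (vfv x) M)) /\
  (forall (V : val) k, wf_val xs k.+1 V -> wf_val (x |` xs) k (open_val k (vfv x) V)).
Proof.
pose P := (fun M : tm => forall k, wf_tm xs k.+1 M -> wf_tm (x |` xs) k (open_tm k (vfv x) M)).
pose Q := (fun V : val => forall k, wf_val xs k.+1 V -> wf_val (x |` xs) k (open_val k (vfv x) V)).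
have H : (forall M, P M) /\ (forall V, Q V).
  split; [apply: (@tm_mut Sig ar P Q)| apply: (@val_mut Sig ar P Q)]; rewrite /P /Q /=.
  all: try (by move=> v IH k h; rewrite IH).
  all: try (by move=> v IHv w IHw k /andP[h1 h2]; rewrite IHv // IHw).
  all: try (by move=> s ms IH k /forallP h; apply/forallP => i; apply: IH).
  all: try (by move=> j k h; case: eqP => [_|ne] /=; [rewrite fset1U1|
     rewrite ltn_neqAle; apply/andP; split; [apply/eqP|]]).
  all: try by move=> y k h; rewrite fset1Ur.
by case: H => H1 H2; split; [exact: H1|exact: H2].
Qed.

Lemma wf_close (x : nat) (xs : {fset nat}) : (forall (M : tm) k, wf_tm (x |` xs) k M -> wf_tm xs k.+1 (close_tm k x M)) /\
  (forall (V : val) k, wf_val (x |` xs) k V -> wf_val xs k.+1 (close_val k x V)).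
Proof.
pose P := (fun M : tm => forall k, wf_tm (x |` xs) k M -> wf_tm xs k.+1 (close_tm k x M)).
pose Q := (fun V : val => forall k, wf_val (x |` xs) k V -> wf_val xs k.+1 (close_val k x V)).
have H : (forall M, P M) /\ (forall V, Q V).
  split; [apply: (@tm_mut Sig ar P Q)| apply: (@val_mut Sig ar P Q)]; rewrite /P /Q /=.
  all: try (by move=> v IH k h; rewrite IH).
  all: try (by move=> v IHv w IHw k /andP[h1 h2]; rewrite IHv // IHw).
  all: try (by move=> s ms IH k /forallP h; apply/forallP => i; apply: IH).
  all: try (by move=> j k h; apply: ltnW).
  all: try by move=> y k; rewrite in_fset1U; case: eqP => //= _ /orP[]. 
by case: H => H1 H2; split; [exact: H1|exact: H2].
Qed.

Lemma st_pos (M : tm) : 0 < st M.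
Proof. by case: M. Qed.

Lemma fresh2 (xs : {fset nat}) n : exists x, n <= x /\ x \notin xs.
Proof. exact: fresh_ex. Qed.

Lemma compat_refl (R : lrel ar) : compatible R -> forall n,
  (forall (M : tm) xs, st M <= n -> terms xs M -> relT R xs M M) /\
  (forall (V : val) xs, sv V <= n -> values xs V -> relV R xs V V).
Proof.
case=> [Cvar [Clam [Cret [Capp [Cseq Cop]]]]].
elim=> [|n [IHt IHv]].
  split; first by move=> M xs; rewrite leqNgt st_pos.
  case=> [j|y|m] xs /=; rewrite /values /=. by []. by move=> _; apply: Cvar. by [].
split.
  case=> [v|v w|m p|s ms] xs /=; rewrite ltnS /terms /=.
  - by move=> h1 h2; apply: Cret; apply: IHv.
  - move=> h /andP[h1 h2]; apply: Capp; apply: IHv => //.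
      exact: leq_trans (leq_addr _ _) h.
    exact: leq_trans (leq_addl _ _) h.
  - move=> h /andP[h1 h2].
    have [x [hx1 hx2]] := fresh_ex xs (nbt p).
    have := Cseq xs x m m (open_tm 0 (vfv x) p) (open_tm 0 (vfv x) p).
    rewrite /seqto (proj1 (close_open _) p 0 hx1); apply => //.
      by apply: IHt => //; exact: leq_trans (leq_addr _ _) h.
    apply: IHt; last exact: (proj1 (wf_open _ _)).
    rewrite (proj1 (st_open _)); exact: leq_trans (leq_addl _ _) h.
  - move=> h /forallP hw; apply: Cop => i; apply: IHt; last exact: hw.
    apply: leq_trans h; exact: (@leq_bigmax _ (fun j => st (ms j)) i).
case=> [j|y|m] xs /=; rewrite /values /=.
- by [].
- by move=> _; apply: Cvar.
rewrite ltnS => h hw.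
have [x [hx1 hx2]] := fresh_ex xs (nbt m).
have := Clam xs x (open_tm 0 (vfv x) m) (open_tm 0 (vfv x) m).
rewrite /lam (proj1 (close_open _) m 0 hx1); apply => //.
apply: IHt; last exact: (proj1 (wf_open _ _)).
by rewrite (proj1 (st_open _)).
Qed.

End S.

Inductive tc {A : Type} (R : A -> A -> Prop) : A -> A -> Prop :=
| tc1 x y : R x y -> tc R x y
| tcS x y z : R x y -> tc R y z -> tc R x z.

Lemma tc_trans {A : Type} (R : A -> A -> Prop) x y z : tc R x y -> tc R y z -> tc R x z.
Proof. elim=> [a b h|a b c h _ IH] h2; [exact: tcS h h2| exact: tcS h (IH h2)]. Qed.

Lemma tc_map {A B : Type} (R : A -> A -> Prop) (S : B -> B -> Prop) (f : A -> B) :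
  (forall x y, R x y -> tc S (f x) (f y)) -> forall x y, tc R x y -> tc S (f x) (f y).
Proof. move=> H x y; elim=> [a b h|a b c h _ IH]; [exact: H| exact: tc_trans (H _ _ h) IH]. Qed.

Lemma tc_ind2 {A : Type} (R : A -> A -> Prop) (P : A -> A -> Prop) :
  (forall x y, R x y -> P x y) -> (forall x y z, P x y -> P y z -> P x z) ->
  forall x y, tc R x y -> P x y.
Proof. move=> H1 H2 x y; elim=> [a b h|a b c h _ IH]; [exact: H1| exact: H2 (H1 _ _ h) IH]. Qed.

Section Main.
Variables (Sig : Type) (ar : Sig -> nat) (T : Type -> Type) (M : monad_ops ar T) (G : relT_type T).
Hypothesis HG : relator M G.
Local Notation tm := (tm ar).
Local Notation val := (Defs.val ar).
Local Notation C := (ctx_preorder M G).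

Definition member (R : lrel ar) := is_lrel R /\ compatible R /\ preadequate M G R.

Definition Idr : lrel ar := LRel (fun xs (P Q : tm) => P = Q /\ terms xs P)
   (fun xs (V W : val) => V = W /\ values xs V).

Lemma Gmono X Y (R R' : X -> Y -> Prop) u v :
  (forall x y, R x y -> R' x y) -> G R u v -> G R' u v.
Proof. by case: HG => [_ [_ [_ [H _]]]]; apply: H. Qed.

Lemma Idr_member : member Idr.
Proof.
split; first by split=> xs P Q [<-].
split; last first.
  move=> P Q [<- _]; apply: (@Gmono _ _ (@eq _)) => //.
  by case: HG => [H _]; apply: H.
split; first by move=> xs x h; split.
split. move=> xs x P Q _ [<- h]; split => //; rewrite /values /lam /=. exact: (proj1 (wf_close ar x xs)) h.
split; first by move=> xs V W [<- h].
split; first by move=> xs V V' W W' [<- h1] [<- h2]; split => //; rewrite /terms /=; rewrite /values in h1 h2; rewrite h1 h2.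
split.
  move=> xs x P P' Q Q' [<- h1] _ [<- h2]; split => //.
  by rewrite /terms /seqto /=; rewrite /terms in h1; rewrite h1 /=; exact: (proj1 (wf_close ar x xs)) h2.
move=> xs s ps qs H.
have e : ps = qs by apply: functional_extensionality => i; case: (H i).
subst; split => //; rewrite /terms /=; apply/forallP => i; by case: (H i).
Qed.

Definition K : lrel ar := LRel (fun xs => tc (relT C xs)) (fun xs => tc (relV C xs)).

Lemma C_wf : is_lrel C.
Proof.
split.
  by move=> xs P Q [R [[HR _] [_ [_ h]]]]; apply: HR h.
by move=> xs P Q [R [[_ HR] [_ [_ h]]]]; apply: HR h.
Qed.

Lemma K_wf : is_lrel K.
Proof.
split=> xs P Q /=.
  move=> h; have [h1 _] := tc_ind2 (P := fun P Q => terms xs P /\ terms xs Q)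
    (proj1 C_wf xs) (fun x y z (a : _ /\ _) (b : _ /\ _) => conj (proj1 a) (proj2 b)) h.
  split => //.
  by have [] := tc_ind2 (P := fun P Q => terms xs P /\ terms xs Q)
    (proj1 C_wf xs) (fun x y z (a : _ /\ _) (b : _ /\ _) => conj (proj1 a) (proj2 b)) h.
move=> h.
by have [] := tc_ind2 (P := fun P Q => values xs P /\ values xs Q)
    (proj2 C_wf xs) (fun x y z (a : _ /\ _) (b : _ /\ _) => conj (proj1 a) (proj2 b)) h.
Qed.

Lemma K_pre : preadequate M G K.
Proof.
move=> P Q /= h.
apply: (tc_ind2 (P := fun P Q => G (@Urel _ ar) (sem M P) (sem M Q))) h.
  by move=> x y [R [_ [_ [HR h]]]]; apply: HR.
move=> x y z h1 h2; apply: (@Gmono _ _ (rcomp (@Urel _ ar) (@Urel _ ar))) => //.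
by case: HG => [_ [H _]]; apply: H h1 h2.
Qed.

Lemma C_refl_t xs (P : tm) : terms xs P -> relT C xs P P.
Proof. by move=> h; exists Idr; have [? [? ?]] := Idr_member; do 3 (split => //). Qed.

Lemma mem_refl_t R xs (P : tm) : member R -> terms xs P -> relT R xs P P.
Proof. by move=> [_ [HC _]] h; apply: (proj1 (compat_refl HC (st P))). Qed.

Lemma mem_refl_v R xs (V : val) : member R -> values xs V -> relV R xs V V.
Proof. by move=> [_ [HC _]] h; apply: (proj2 (compat_refl HC (sv V))). Qed.

Lemma K_compat : compatible K.
Proof.
split.
  move=> xs x h; apply: tc1; exists Idr; have [? [? ?]] := Idr_member; do 3 (split => //).
split.
  move=> xs x P Q hx h /=.
  apply: (tc_map (f := lam x)) h => a b [R [HR1 [HR2 [HR3 h]]]].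
  apply: tc1; exists R; split => //; split => //; split => //.
  by apply: (proj1 (proj2 HR2)).
split.
  move=> xs V W h /=.
  apply: (tc_map (f := tret)) h => a b [R [HR1 [HR2 [HR3 h]]]].
  apply: tc1; exists R; split => //; split => //; split => //.
  by apply: (proj1 (proj2 (proj2 HR2))).
split.
  move=> xs V V' W W' h1 h2 /=.
  have [wV wV'] := proj2 K_wf xs V V' h1.
  have [wW wW'] := proj2 K_wf xs W W' h2.
  apply: (@tc_trans _ _ _ (tapp V' W)).
    apply: (tc_map (f := fun v => tapp v W)) h1 => a b [R [HR1 [HR2 [HR3 h]]]].
    apply: tc1; exists R; split => //; split => //; split => //.
    apply: (proj1 (proj2 (proj2 (proj2 HR2)))) => //.
    by apply: mem_refl_v.
  apply: (tc_map (f := fun w => tapp V' w)) h2 => a b [R [HR1 [HR2 [HR3 h]]]].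
  apply: tc1; exists R; split => //; split => //; split => //.
  apply: (proj1 (proj2 (proj2 (proj2 HR2)))) => //.
  by apply: mem_refl_v.
split.
  move=> xs x P P' Q Q' h1 hx h2 /=.
  have [wP wP'] := proj1 K_wf xs P P' h1.
  have [wQ wQ'] := proj1 K_wf _ Q Q' h2.
  apply: (@tc_trans _ _ _ (seqto P' x Q)).
    apply: (tc_map (f := fun p => seqto p x Q)) h1 => a b [R [HR1 [HR2 [HR3 h]]]].
    apply: tc1; exists R; split => //; split => //; split => //.
    apply: (proj1 (proj2 (proj2 (proj2 (proj2 HR2))))) => //.
    by apply: mem_refl_t.
  apply: (tc_map (f := fun q => seqto P' x q)) h2 => a b [R [HR1 [HR2 [HR3 h]]]].
  apply: tc1; exists R; split => //; split => //; split => //.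
  apply: (proj1 (proj2 (proj2 (proj2 (proj2 HR2))))) => //.
  by apply: mem_refl_t.
move=> xs s ps qs H /=.
have wp i : terms xs (ps i) by case: (proj1 K_wf xs _ _ (H i)).
have wq i : terms xs (qs i) by case: (proj1 K_wf xs _ _ (H i)).
pose r (j : nat) := fun i : 'I_(ar s) => if i < j then qs i else ps i.
have key j : j <= ar s -> tc (relT C xs) (top s ps) (top s (r j)).
  elim: j => [_|j IH hj].
    have -> : r 0 = ps by apply: functional_extensionality => i.
    apply: tc1; apply: C_refl_t; rewrite /terms /=; apply/forallP => i; exact: wp.
  apply: tc_trans (IH (ltnW hj)) _.
  pose o := Ordinal hj.
  pose f := fun t => top s (fun i => if i == o then t else r j i).
  have e1 : f (ps o) = top s (r j).
    rewrite /f; f_equal; apply: functional_extensionality => i.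
    by case: eqP => [->|] //; rewrite /r /= ltnn.
  have e2 : f (qs o) = top s (r j.+1).
    rewrite /f; f_equal; apply: functional_extensionality => i.
    case: eqP => [->|ne]; first by rewrite /r /= ltnSn.
    rewrite /r /= ltnS.
    have -> : (nat_of_ord i <= j) = (nat_of_ord i < j).
      rewrite leq_eqVlt (_ : (nat_of_ord i == j) = false) //.
      by apply/negP => /eqP ei; apply: ne; apply: val_inj.
    by [].
  rewrite -e1 -e2.
  apply: (tc_map (f := f)) (H o) => a b [R [HR1 [HR2 [HR3 h]]]].
  apply: tc1; exists R; split => //; split => //; split => //.
  apply: (proj2 (proj2 (proj2 (proj2 (proj2 HR2))))) => i.
  case: eqP => _ //.
  apply: (mem_refl_t (conj HR1 (conj HR2 HR3))).
  by rewrite /r; case: ifP.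
have -> : qs = r (ar s) by apply: functional_extensionality => i; rewrite /r ltn_ord.
exact: key.
Qed.

Lemma K_member : member K.
Proof. split; [exact: K_wf|split; [exact: K_compat|exact: K_pre]]. Qed.

End Main.

Unset Implicit Arguments.

Theorem mainTheorem7 (Sig : Type) (ar : Sig -> nat) (T : Type -> Type)
    (M : monad_ops ar T) (G : relT_type T) :
  cont_sigma_monad M ->
  relator M G -> inductive_relator M G -> respects_sig M G ->
  is_lrel (ctx_preorder M G) /\ compatible (ctx_preorder M G) /\
  preadequate M G (ctx_preorder M G) /\ is_preorder (ctx_preorder M G).
Proof.
move=> _ HG _ _.
have Km := K_member HG.
have KCt : forall xs P Q, relT (K M G) xs P Q -> relT (ctx_preorder M G) xs P Q.
  by move=> xs P Q h; exists (K M G); case: Km => [? [? ?]].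
have KCv : forall xs P Q, relV (K M G) xs P Q -> relV (ctx_preorder M G) xs P Q.
  by move=> xs P Q h; exists (K M G); case: Km => [? [? ?]].
have [C1 [C2 [C3 [C4 [C5 C6]]]]] := K_compat HG.
split; first exact: C_wf.
split.
  split; first by move=> xs x h; apply: KCv; apply: C1.
  split; first by move=> xs x P Q hx h; apply: KCv; apply: C2 => //; apply: tc1.
  split; first by move=> xs V W h; apply: KCt; apply: C3; apply: tc1.
  split; first by move=> xs V V' W W' h1 h2; apply: KCt; apply: C4; apply: tc1.
  split; first by move=> xs x P P' Q Q' h1 hx h2; apply: KCt; apply: C5 => //; apply: tc1.
  by move=> xs s ps qs H; apply: KCt; apply: C6 => i; apply: tc1.
split; first by move=> P Q [R [_ [_ [HR h]]]]; exact: HR.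
move=> xs; split; first by move=> P hP; apply: C_refl_t.
split; first by move=> P Q S _ _ _ h1 h2; apply: KCt; exact: tc_trans (tc1 h1) (tc1 h2).
split; last by move=> P Q S _ _ _ h1 h2; apply: KCv; exact: tc_trans (tc1 h1) (tc1 h2).
move=> V hV; exists (Idr ar); have [? [? ?]] := Idr_member HG; do 3 (split => //).
Qed.
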